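(* For all integers $k\ge 1$ and $n>2k$, $b_{2k}(n)-b_{2k}(n-1)\ge\frac12\binom{n-1}{2k-1}$.
   Context: For $n$ and $t$ with $n/2+t$ a nonnegative integer and $|t|\le n/2$, ${\cal B}^{(2k)}(n,t)$ is the $2k$-uniform hypergraph whose vertex set of size $n$ is partitioned into $V_1,V_2$ with $|V_1|=n/2+t$, $|V_2|=n/2-t$, and whose edges are all $2k$-subsets meeting each of $V_1,V_2$ in an odd number of elements; $b_{2k}(n)$ is the maximum of its number of edges over all admissible $t$. *)

(* Defs.v *)
From mathcomp Require Import all_boot.
Set Implicit Arguments. Unset Strict Implicit. Unset Printing Implicit Defensive.

(* Vertex set {0,..,n-1} = 'I_n, partitioned into V1 = {i | i < a}
   (|V1| = a = n/2 + t) and V2 = its complement (|V2| = n - a = n/2 - t). *)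
Definition V1 (n a : nat) : {set 'I_n} := [set i : 'I_n | i < a].

(* Edge set of B^(2k)(n,t) with a = n/2 + t: all 2k-subsets meeting
   each of V1, V2 in an odd number of elements. *)
Definition Bedges (k n a : nat) : {set {set 'I_n}} :=
  [set S : {set 'I_n} | [&& #|S| == (2 * k)%N,
                            odd #|S :&: V1 n a| & odd #|S :&: ~: V1 n a|]].

(* b_{2k}(n): maximum number of edges over admissible t, i.e. over a = 0..n. *)
Definition b2k (k n : nat) : nat := \max_(a < n.+1) #|Bedges k n a|.

(* Main.v *)
Require Import Defs.
From mathcomp Require Import all_boot zify.

Lemma BedgesE k n a :
  #|Bedges k n a| = #|[set S : {set 'I_n} | (#|S| == 2 * k) && odd #|S :&: V1 n a|]|.
Proof.
apply: eq_card => S; rewrite !inE.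
case: eqP => //= HS.
have := cardsID (V1 n a) S; rewrite setDE HS => H.
have : odd (#|S :&: V1 n a| + #|S :&: ~: V1 n a|) = false by rewrite H oddM.
rewrite oddD; case: (odd _); case: (odd _) => //.
Qed.

Section Split.
Variable m : nat.
Variable x : 'I_m.+1.
Definition f1 (T : {set 'I_m}) : {set 'I_m.+1} := [set lift x j | j in T].
Definition f2 (T : {set 'I_m}) : {set 'I_m.+1} := x |: f1 T.

Lemma f1_inj : injective f1.
Proof. exact: imset_inj (@lift_inj _ x). Qed.

Lemma x_notin_f1 T : x \notin f1 T.
Proof. apply/imsetP => [[j _ E]]; by have := neq_lift x j; rewrite -E eqxx. Qed.

Lemma f2_inj : injective f2.
Proof.
move=> T1 T2 e; apply/setP => j.
have := congr1 (fun S : {set 'I_m.+1} => lift x j \in S) e.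
by rewrite /f2 !inE eq_sym (negbTE (neq_lift x j)) /= /f1 !mem_imset //; apply: lift_inj.
Qed.

Lemma split_card (P : {set 'I_m.+1} -> bool) :
  #|[set S | P S]| = #|[set T | P (f1 T)]| + #|[set T | P (f2 T)]|.
Proof.
rewrite -(cardsID [set S : {set 'I_m.+1} | x \in S]) addnC.
have -> : [set S | P S] :\: [set S : {set 'I_m.+1} | x \in S] = f1 @: [set T | P (f1 T)].
  apply/setP => S; rewrite !inE; apply/andP/imsetP.
  - move=> [xS PS].
    have E : S = f1 [set j | lift x j \in S].
      apply/setP => y; case: (unliftP x y) => [j ->|->]; last by rewrite (negbTE xS) (negbTE (x_notin_f1 _)).
      by rewrite /f1 mem_imset ?inE //; apply: lift_inj.
    by exists [set j | lift x j \in S]; rewrite ?inE -?E.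
  - by move=> [T]; rewrite inE => PT ->; rewrite x_notin_f1.
have -> : [set S | P S] :&: [set S : {set 'I_m.+1} | x \in S] = f2 @: [set T | P (f2 T)].
  apply/setP => S; rewrite !inE; apply/andP/imsetP.
  - move=> [PS xS].
    have E : S = f2 [set j | lift x j \in S].
      apply/setP => y; rewrite /f2 !inE; case: (unliftP x y) => [j ->|->]; last by rewrite xS eqxx.
      by rewrite eq_sym (negbTE (neq_lift x j)) /f1 mem_imset ?inE //; apply: lift_inj.
    by exists [set j | lift x j \in S]; rewrite ?inE -?E.
  - by move=> [T]; rewrite inE => PT ->; rewrite /f2 setU11.
by rewrite !card_imset //; [apply: f2_inj | apply: f1_inj].
Qed.
End Split.
Arguments f1 {m}. Arguments f2 {m}. Arguments x_notin_f1 {m}. Arguments split_card {m}.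

Lemma main_ineq k m a : 1 <= k -> a <= m ->
  2 * #|Bedges k m a| + 'C(m, (2 * k).-1) =
  #|Bedges k m.+1 a| + #|Bedges k m.+1 a.+1|.
Proof.
move=> k1 am.
set x : 'I_m.+1 := inord a.
have xv : (x : nat) = a by rewrite /x inordK // ltnS.
have liftlt : forall j : 'I_m, (lift x j < a) = (j < a).
  move=> j; rewrite /= /bump xv; case: leqP => h /=; lia.
have liftlt1 : forall j : 'I_m, (lift x j < a.+1) = (j < a).
  move=> j; rewrite /= /bump xv; case: leqP => h /=; lia.
have I1 : forall b T, (b = a \/ b = a.+1) ->
   #|f1 x T :&: V1 m.+1 b| = #|T :&: V1 m a|.
  move=> b T hb; rewrite -(card_imset _ (@lift_inj _ x)); apply: eq_card => y.
  rewrite !inE; case: (unliftP x y) => [j ->|->].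
    rewrite /f1 !mem_imset ?inE //; try apply: lift_inj.
    by case: hb => ->; rewrite ?liftlt ?liftlt1.
  rewrite (negbTE (x_notin_f1 _ _)) /=; apply/esym/imsetP => [[j _ E]].
  by have := neq_lift x j; rewrite -E eqxx.
have C1 : forall T, #|f1 x T| = #|T|.
  by move=> T; rewrite card_imset //; apply: lift_inj.
have C2 : forall T, #|f2 x T| = #|T|.+1.
  by move=> T; rewrite cardsU1 x_notin_f1 C1.
have I2 : forall T, #|f2 x T :&: V1 m.+1 a| = #|T :&: V1 m a|.
  move=> T; rewrite -(I1 a T (or_introl erefl)); apply: eq_card => y.
  rewrite /f2 !inE; case: eqP => [->|] //=.
  by rewrite xv ltnn andbF.
have I3 : forall T, #|f2 x T :&: V1 m.+1 a.+1| = #|T :&: V1 m a|.+1.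
  move=> T; rewrite -(I1 a.+1 T (or_intror erefl)) /f2 setIUl.
  rewrite (_ : [set x] :&: V1 m.+1 a.+1 = [set x]); last first.
    by apply/setIidPl; rewrite sub1set inE xv.
  by rewrite cardsU1 inE (negbTE (x_notin_f1 _ _)).
rewrite !BedgesE !(split_card x) /=.
set A1 := #|[set T | _]|.
have -> : #|[set T : {set 'I_m} | (#|f1 x T| == 2 * k) && odd #|f1 x T :&: V1 m.+1 a|]| = A1.
  by apply: eq_card => T; rewrite !inE C1 (I1 a T (or_introl erefl)).
have -> : #|[set T : {set 'I_m} | (#|f1 x T| == 2 * k) && odd #|f1 x T :&: V1 m.+1 a.+1|]| = A1.
  by apply: eq_card => T; rewrite !inE C1 (I1 a.+1 T (or_intror erefl)).
have E2k : 2 * k = ((2 * k).-1).+1 by rewrite prednK // muln_gt0.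
set B := #|[set T | _ & odd #|f2 x T :&: V1 m.+1 a|]|.
set C := #|[set T | _ & odd #|f2 x T :&: V1 m.+1 a.+1|]|.
suff -> : 'C(m, (2 * k).-1) = B + C by lia.
rewrite -[X in 'C(X, _)]card_ord -card_draws.
rewrite -(cardsID [set T : {set 'I_m} | odd #|T :&: V1 m a|]); congr (_ + _).
  apply: eq_card => T; rewrite !inE C2 I2 E2k eqSS /=.
  by case: (_ == _).
apply: eq_card => T; rewrite !inE C2 I3 E2k eqSS /=.
by case: (_ == _); case: (odd _).
Qed.

Theorem lemma3p2 (k n : nat) :
  1 <= k -> 2 * k < n ->
  2 * b2k k n.-1 + 'C(n.-1, (2 * k).-1) <= 2 * b2k k n.
Proof.
move=> k1 kn; case: n kn => // m kn /=.
rewrite /b2k; have [i ->] := @eq_bigmax _ (fun a : 'I_m.+1 => #|Bedges k m a|) ltac:(by rewrite card_ord).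
have im : i <= m by rewrite -ltnS.
have H1 : forall b, b <= m.+1 -> #|Bedges k m.+1 b| <= \max_(a < m.+2) #|Bedges k m.+1 a|.
  move=> b hb; have := @leq_bigmax _ (fun a : 'I_m.+2 => #|Bedges k m.+1 a|) (inord b).
  by rewrite /= inordK.
rewrite /= main_ineq // mul2n -addnn leq_add //; apply: H1; lia.
Qed.
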